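(* For every $n\ge1$, the reflexive complete graph $K^n$ is fibrant in the Matsushita model structure on $\mathbf{Gr}$ (and hence, regarded as a loop graph with all vertices looped, in the Matsushita model structure on $\mathbf{Gr}_\ell$); that is, $\mathrm{Ex}^2\mathrm{Sing}\,\mathrm{C}\ell(K^n)$ is a Kan complex.
   Context: A simplicial complex consists of a vertex set and a collection of nonempty finite subsets (simplices) containing all singletons and closed under nonempty subsets; maps are vertex functions preserving simplices; $\mathbf{Cpx}$ is the category. $\mathbf{Gr}$ (reflexive graphs) is the full subcategory of complexes whose simplices have at most two elements; $K^n$ is the reflexive graph on $n$ vertices with all edges. $\mathrm{C}\ell:\mathbf{Gr}\to\mathbf{Cpx}$ is the clique complex functor. $\mathbf{\Delta}^n$ is the complex on $\{0,\dots,n\}$ with all nonempty subsets simplices, $\mathrm{Sing}(K)_n=\mathbf{Cpx}(\mathbf{\Delta}^n,K)$, $\mathrm{Ex}$ is the right adjoint of barycentric subdivision. In the Matsushita model structure on $\mathbf{Gr}$ a map $f$ is a fibration iff $\mathrm{Ex}^2\mathrm{Sing}\,\mathrm{C}\ell(f)$ is a Kan fibration. Loop graphs are sets with a symmetric relation; in the Matsushita model structure on loop graphs a map $f$ is a fibration iff its restriction $f^\circ$ to maximal reflexive subgraphs (induced on looped vertices) is a Matsushita fibration in $\mathbf{Gr}$. *)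

(* Defs.v *)
From Stdlib Require Import FunctionalExtensionality ProofIrrelevance.
From HB Require Import structures.
From mathcomp Require Import all_boot.

Set Implicit Arguments.
Unset Strict Implicit.
Unset Printing Implicit Defensive.

Definition finite_pred {V : Type} (A : V -> Prop) : Prop :=
  exists (k : nat) (e : 'I_k -> V), forall x, A x -> exists i, e i = x.

Record Cpx := {
  cV : Type;
  csimp : (cV -> Prop) -> Prop;
  csimp_fin : forall A, csimp A -> finite_pred A /\ exists x, A x;
  csimp_single : forall x : cV, csimp (fun y => y = x);
  csimp_sub : forall A B : cV -> Prop, csimp A -> (forall x, B x -> A x) ->
                (exists x, B x) -> csimp B }.

Definition img {V W : Type} (f : V -> W) (A : V -> Prop) : W -> Prop :=
  fun y => exists x, A x /\ f x = y.

Definition cpx_map (K L : Cpx) (f : cV K -> cV L) : Prop :=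
  forall A, csimp A -> csimp (img f A).

Lemma cpx_map_comp (K L M : Cpx) (f : cV K -> cV L) (g : cV L -> cV M) :
  cpx_map f -> cpx_map g -> cpx_map (fun x => g (f x)).
Proof.
move=> hf hg A hA.
have hB := hg _ (hf _ hA).
apply: (csimp_sub hB).
  by move=> y [x [Ax <-]]; exists (f x); split => //; exists x.
have [_ [x Ax]] := csimp_fin hA.
by exists (g (f x)); exists x.
Qed.

Definition DeltaC_simp (n : nat) (A : 'I_n.+1 -> Prop) : Prop := exists x, A x.

Lemma DeltaC_fin n A : @DeltaC_simp n A -> finite_pred A /\ exists x, A x.
Proof. by move=> h; split => //; exists n.+1, id => x _; exists x. Qed.

Lemma DeltaC_single n (x : 'I_n.+1) : @DeltaC_simp n (fun y => y = x).
Proof. by exists x. Qed.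

Lemma DeltaC_sub n (A B : 'I_n.+1 -> Prop) : @DeltaC_simp n A ->
  (forall x, B x -> A x) -> (exists x, B x) -> @DeltaC_simp n B.
Proof. by []. Qed.

Definition DeltaC (n : nat) : Cpx :=
  {| cV := 'I_n.+1; csimp := @DeltaC_simp n;
     csimp_fin := @DeltaC_fin n; csimp_single := @DeltaC_single n;
     csimp_sub := @DeltaC_sub n |}.

Definition is_graph (K : Cpx) : Prop :=
  forall A, csimp A -> exists x y : cV K, forall z, A z -> z = x \/ z = y.

Record Gr := { gcpx : Cpx; gcpx_graph : is_graph gcpx }.

Definition Kn_simp (n : nat) (A : 'I_n -> Prop) : Prop :=
  (exists x, A x) /\ exists x y, forall z, A z -> z = x \/ z = y.

Lemma Kn_fin n A : @Kn_simp n A -> finite_pred A /\ exists x, A x.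
Proof. by move=> [h _]; split => //; exists n, id => x _; exists x. Qed.

Lemma Kn_single n (x : 'I_n) : @Kn_simp n (fun y => y = x).
Proof. by split; [exists x | exists x, x => z ->; left]. Qed.

Lemma Kn_sub n (A B : 'I_n -> Prop) : @Kn_simp n A ->
  (forall x, B x -> A x) -> (exists x, B x) -> @Kn_simp n B.
Proof.
move=> [_ [x [y h]]] hBA hB; split => //; exists x, y => z Bz; exact: h (hBA _ Bz).
Qed.

Definition Kn_cpx (n : nat) : Cpx :=
  {| cV := 'I_n; csimp := @Kn_simp n; csimp_fin := @Kn_fin n;
     csimp_single := @Kn_single n; csimp_sub := @Kn_sub n |}.

Lemma Kn_graph n : is_graph (Kn_cpx n).
Proof. by move=> A [_ h]. Qed.

Definition Kn (n : nat) : Gr := {| gcpx := Kn_cpx n; gcpx_graph := @Kn_graph n |}.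

Definition Cl_simp (G : Gr) (A : cV (gcpx G) -> Prop) : Prop :=
  [/\ finite_pred A, exists x, A x &
      forall x y, A x -> A y -> csimp (fun z => z = x \/ z = y)].

Lemma Cl_fin G A : @Cl_simp G A -> finite_pred A /\ exists x, A x.
Proof. by case. Qed.

Lemma Cl_single G (x : cV (gcpx G)) : @Cl_simp G (fun y => y = x).
Proof.
split; first by exists 1, (fun _ => x) => y ->; exists ord0.
  by exists x.
move=> y z -> ->; apply: (csimp_sub (csimp_single x)).
  by move=> w [|].
by exists x; left.
Qed.

Lemma Cl_sub G (A B : cV (gcpx G) -> Prop) : @Cl_simp G A ->
  (forall x, B x -> A x) -> (exists x, B x) -> @Cl_simp G B.
Proof.
move=> [[k [e he]] _ hp] hBA hB; split => //.
  by exists k, e => x Bx; apply: he; apply: hBA.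
by move=> x y Bx By; apply: hp; apply: hBA.
Qed.

Definition Cl (G : Gr) : Cpx :=
  {| cV := cV (gcpx G); csimp := @Cl_simp G; csimp_fin := @Cl_fin G;
     csimp_single := @Cl_single G; csimp_sub := @Cl_sub G |}.

Definition monob (m n : nat) (f : {ffun 'I_m.+1 -> 'I_n.+1}) : bool :=
  [forall i : 'I_m.+1, forall j : 'I_m.+1, (i <= j) ==> (f i <= f j)].

Definition Dmor (m n : nat) := {f : {ffun 'I_m.+1 -> 'I_n.+1} | monob f}.

Lemma monob_id n : monob [ffun i : 'I_n.+1 => i].
Proof. by apply/forallP => i; apply/forallP => j; rewrite !ffunE; apply/implyP. Qed.

Definition Did (n : nat) : Dmor n n := exist (@monob n n) _ (monob_id n).

Lemma monob_comp m n p (g : Dmor n p) (f : Dmor m n) :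
  monob [ffun i => proj1_sig g (proj1_sig f i)].
Proof.
case: g => g hg; case: f => f hf /=.
move/forallP: hg => hg; move/forallP: hf => hf.
apply/forallP => i; apply/forallP => j; rewrite !ffunE; apply/implyP => hij.
have /forallP/(_ j)/implyP/(_ hij) := hf i => hfij.
by have /forallP/(_ (f j))/implyP/(_ hfij) := hg (f i).
Qed.

Definition Dcomp m n p (g : Dmor n p) (f : Dmor m n) : Dmor m p :=
  exist (@monob m p) _ (monob_comp g f).

Record sSet := {
  sx : nat -> Type;
  sact : forall m n, Dmor m n -> sx n -> sx m;
  sact_id : forall n (x : sx n), sact (Did n) x = x;
  sact_comp : forall m n p (f : Dmor m n) (g : Dmor n p) (x : sx p),
      sact (Dcomp g f) x = sact f (sact g x) }.
Arguments sact {s m n}.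

Unset Implicit Arguments.
Record sMap (X Y : sSet) := {
  smap : forall n, sx X n -> sx Y n;
  snat : forall m n (f : Dmor m n) (x : sx X n),
      smap m (sact f x) = sact f (smap n x) }.
Arguments smap {X Y} s n.
Arguments snat {X Y} s {m n}.
Set Implicit Arguments.

Lemma sMap_eq (X Y : sSet) (f g : sMap X Y) :
  (forall n x, smap f n x = smap g n x) -> f = g.
Proof.
case: f => f hf; case: g => g hg /= h.
have e : f = g.
  by apply: functional_extensionality_dep => n; apply: functional_extensionality.
by subst g; f_equal; apply: proof_irrelevance.
Qed.

Definition scomp (X Y Z : sSet) (g : sMap Y Z) (f : sMap X Y) : sMap X Z.
Proof.
refine {| smap := fun n x => smap g n (smap f n x) |}.
by move=> m n h x; rewrite (snat f) (snat g).
Defined.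

Lemma sig_eq (A : Type) (P : A -> Prop) (x y : sig P) :
  proj1_sig x = proj1_sig y -> x = y.
Proof. by case: x => x px; case: y => y py /= e; subst y; f_equal; apply: proof_irrelevance. Qed.

Lemma Dcomp_id_r m n (g : Dmor m n) : Dcomp g (Did m) = g.
Proof. by apply: sig_eq; apply/ffunP => i; rewrite /= !ffunE. Qed.

Lemma Dcomp_assoc m n p q (h : Dmor p q) (g : Dmor n p) (f : Dmor m n) :
  Dcomp h (Dcomp g f) = Dcomp (Dcomp h g) f.
Proof. by apply: sig_eq; apply/ffunP => i; rewrite /= !ffunE. Qed.

Definition Delta (n : nat) : sSet.
Proof.
refine {| sx := fun m => Dmor m n;
          sact := fun m p (f : Dmor m p) (x : Dmor p n) => Dcomp x f |}.
- by move=> p x; apply: Dcomp_id_r.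
- by move=> m p q f g x; apply: Dcomp_assoc.
Defined.

Definition hornb (n : nat) (k : 'I_n.+1) m (f : Dmor m n) : bool :=
  [exists j : 'I_n.+1, (j != k) && [forall i : 'I_m.+1, proj1_sig f i != j]].

Lemma hornb_act n k m p (f : Dmor m p) (x : Dmor p n) :
  hornb k x -> hornb k (Dcomp x f).
Proof.
move=> /existsP [j /andP [jk /forallP hj]]; apply/existsP; exists j.
by rewrite jk /=; apply/forallP => i; rewrite ffunE.
Qed.

Definition Horn (n : nat) (k : 'I_n.+1) : sSet.
Proof.
refine {| sx := fun m => {f : Dmor m n | hornb k f};
          sact := fun m p (f : Dmor m p) x =>
                    exist _ (Dcomp (proj1_sig x) f) (hornb_act f (proj2_sig x)) |}.
- by move=> p x; apply: sig_eq; apply: Dcomp_id_r.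
- by move=> m p q f g x; apply: sig_eq; apply: Dcomp_assoc.
Defined.

Definition horn_incl (n : nat) (k : 'I_n.+1) : sMap (Horn k) (Delta n).
Proof.
refine {| smap := fun m (x : sx (Horn k) m) => proj1_sig x : sx (Delta n) m |}.
by [].
Defined.

Definition Kan (X : sSet) : Prop :=
  forall (n : nat) (k : 'I_n.+1), 0 < n ->
  forall h : sMap (Horn k) X,
  exists g : sMap (Delta n) X, scomp g (horn_incl k) = h.

Lemma Dmor_cpx m n (f : Dmor m n) :
  cpx_map (K := DeltaC m) (L := DeltaC n) (fun i => proj1_sig f i).
Proof. by move=> A [x Ax]; exists (proj1_sig f x); exists x. Qed.

Definition Sing (K : Cpx) : sSet.
Proof.
refine {| sx := fun n => {f : 'I_n.+1 -> cV K | cpx_map (K := DeltaC n) f};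
          sact := fun m n (th : Dmor m n) x =>
            exist _ (fun i => proj1_sig x (proj1_sig th i))
              (cpx_map_comp (Dmor_cpx th) (proj2_sig x)) |}.
- move=> n x; apply: sig_eq => /=.
  by apply: functional_extensionality => i; rewrite ffunE.
- move=> m n p f g x; apply: sig_eq => /=.
  by apply: functional_extensionality => i; rewrite ffunE.
Defined.

(* sd Delta^n = nerve of the poset of nonempty subsets of [n]:
   m-simplices are chains c_0 <= ... <= c_m of nonempty subsets *)
Definition chainb (m n : nat) (c : {ffun 'I_m.+1 -> {set 'I_n.+1}}) : bool :=
  [forall i : 'I_m.+1, c i != set0] &&
  [forall i : 'I_m.+1, forall j : 'I_m.+1, (i <= j) ==> (c i \subset c j)].

Definition sdx (n m : nat) := {c : {ffun 'I_m.+1 -> {set 'I_n.+1}} | chainb c}.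

Lemma chainb_act n m p (f : Dmor m p) (c : sdx n p) :
  chainb [ffun i => proj1_sig c (proj1_sig f i)].
Proof.
case: c => c hcc; case: f => f hf /=.
move/andP: hcc => [/forallP hne /forallP hc]; move/forallP: hf => hf.
apply/andP; split; apply/forallP => i; rewrite ?ffunE //.
apply/forallP => j; rewrite !ffunE; apply/implyP => hij.
have /forallP/(_ j)/implyP/(_ hij) := hf i => hfij.
by have /forallP/(_ (f j))/implyP/(_ hfij) := hc (f i).
Qed.

Definition sd (n : nat) : sSet.
Proof.
refine {| sx := sdx n;
          sact := fun m p (f : Dmor m p) c => exist (@chainb m n) _ (chainb_act f c) |}.
- by move=> p c; apply: sig_eq; apply/ffunP => i; rewrite /= !ffunE.
- by move=> m p q f g c; apply: sig_eq; apply/ffunP => i; rewrite /= !ffunE.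
Defined.

Lemma chainb_img n n' m (a : Dmor n n') (c : sdx n m) :
  chainb [ffun i => [set proj1_sig a x | x in proj1_sig c i]].
Proof.
case: c => c hcc /=.
move/andP: hcc => [/forallP hne /forallP hc].
apply/andP; split; apply/forallP => i; rewrite ?ffunE.
  by rewrite imset_eq0; apply: hne.
apply/forallP => j; rewrite !ffunE; apply/implyP => hij.
by apply: imsetS; have /forallP/(_ j)/implyP := hc i; apply.
Qed.

Definition sdmap (n n' : nat) (a : Dmor n n') : sMap (sd n) (sd n').
Proof.
refine {| smap := fun m (c : sx (sd n) m) =>
            (exist (@chainb m n') _ (chainb_img a c) : sx (sd n') m) |}.
by move=> m p f c; apply: sig_eq; apply/ffunP => i; rewrite /= !ffunE.
Defined.

Lemma sdmap_id n : sdmap (Did n) = {| smap := fun m x => x; snat := fun _ _ _ _ => erefl |}.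
Proof.
apply: sMap_eq => m c; apply: sig_eq; apply/ffunP => i /=; rewrite ffunE.
by apply/setP => x; apply/imsetP/idP => [[y hy ->]|hx]; [rewrite ffunE|exists x; rewrite ?ffunE].
Qed.

Definition Ex (X : sSet) : sSet.
Proof.
refine {| sx := fun n => sMap (sd n) X;
          sact := fun m n (th : Dmor m n) (phi : sMap (sd n) X) =>
                    scomp phi (sdmap th) |}.
- move=> n phi; apply: sMap_eq => m c /=.
  congr (smap phi m _); apply: sig_eq; apply/ffunP => i /=; rewrite ffunE.
  apply/setP => x; apply/imsetP/idP => [[y hy ->]|hx]; first by rewrite ffunE.
  by exists x; rewrite ?ffunE.
- move=> m n p f g phi; apply: sMap_eq => q c /=.
  congr (smap phi q _); apply: sig_eq; apply/ffunP => i /=; rewrite !ffunE.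
  by rewrite -imset_comp; apply: eq_imset => x /=; rewrite ffunE.
Defined.

(* Main.v *)
Require Import Defs.
From Stdlib Require Import FunctionalExtensionality ProofIrrelevance.
From HB Require Import structures.
From mathcomp Require Import all_boot.
Set Implicit Arguments. Unset Strict Implicit. Unset Printing Implicit Defensive.

(* Proof idea: Cl(K^n) is the full simplex, so Sing is 0-coskeletal and a map
   into Ex^2 of it is determined by a function on vertices of sd^2; we define
   the extension by a function FF on chains of faces of Delta^N, computed from
   the horn via a canonical horn simplex (a retraction). *)

Definition retr_nat m (T : {set 'I_m.+1}) (x : 'I_m.+1) : nat :=
  \max_(y in T | (y <= x) || [forall z in T, y <= z]) y.

Lemma retr_nat_le m (T : {set 'I_m.+1}) x : retr_nat T x <= m.
Proof. by apply/bigmax_leqP => y _; rewrite -ltnS. Qed.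

Definition retr_ffun m (T : {set 'I_m.+1}) : {ffun 'I_m.+1 -> 'I_m.+1} :=
  [ffun x => inord (retr_nat T x)].

Lemma retr_mono m (T : {set 'I_m.+1}) : monob (retr_ffun T).
Proof.
apply/forallP => x; apply/forallP => x'; apply/implyP => hx.
rewrite !ffunE !inordK ?ltnS ?retr_nat_le //.
apply/bigmax_leqP => y /andP [yT c].
apply: leq_bigmax_cond; rewrite yT /=.
case/orP: c => [c|->]; last by rewrite orbT.
by rewrite (leq_trans c hx).
Qed.

Definition retr m (T : {set 'I_m.+1}) : Dmor m m := exist (@monob m m) _ (retr_mono T).

Lemma min_exists m (T : {set 'I_m.+1}) : T != set0 ->
  exists2 y, y \in T & [forall z in T, y <= z].
Proof.
case/set0Pn => y0 y0T.
case: (arg_minnP (fun y : 'I_m.+1 => nat_of_ord y) y0T) => y yT hy.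
by exists y => //; apply/forall_inP.
Qed.

Lemma retr_in m (T : {set 'I_m.+1}) x : T != set0 -> proj1_sig (retr T) x \in T.
Proof.
move=> /min_exists [y0 y0T hy0] /=; rewrite ffunE /retr_nat.
have [|i0 /andP [i0T _] ->] := eq_bigmax_cond (fun y : 'I_m.+1 => nat_of_ord y)
   (A := [pred y | (y \in T) && ((y <= x) || [forall z in T, y <= z])]).
  by apply/card_gt0P; exists y0; rewrite inE /= y0T hy0 orbT.
by rewrite inord_val.
Qed.

Lemma retr_fix m (T : {set 'I_m.+1}) x : x \in T -> proj1_sig (retr T) x = x.
Proof.
move=> xT /=; rewrite ffunE; apply: val_inj; rewrite /= inordK ?ltnS ?retr_nat_le //.
apply/eqP; rewrite eqn_leq; apply/andP; split.
  apply/bigmax_leqP => y /andP [yT /orP [//|/forall_inP h]]; exact: h.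
by apply: leq_bigmax_cond; rewrite xT leqnn.
Qed.

Definition XX n := Sing (Cl (Kn n)).

Lemma any_cpx_map n q (f : 'I_q.+1 -> 'I_n) : cpx_map (K := DeltaC q) (L := Cl (Kn n)) f.
Proof.
move=> A [x Ax]; split.
- by exists q.+1, f => y [z [_ <-]]; exists z.
- by exists (f x), x.
- move=> y z _ _; split; first by exists y; left.
  by exists y, z.
Qed.

Definition mkX n q (f : 'I_q.+1 -> 'I_n) : sx (XX n) q := exist _ f (any_cpx_map f).

Definition gval n N (Fc : {set {set 'I_N.+1}} -> 'I_n) m (th : Dmor m N) p (c : sdx m p)
  q (d : sdx p q) (i : 'I_q.+1) : 'I_n :=
  Fc [set [set proj1_sig th x | x in proj1_sig c j] | j in proj1_sig d i].

Definition g3 n N (Fc : {set {set 'I_N.+1}} -> 'I_n) m (th : Dmor m N) p (c : sdx m p) : sMap (sd p) (XX n).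
Proof.
refine {| smap := fun q (d : sx (sd p) q) => mkX (@gval n N Fc m th p c q d) |}.
move=> q q' f d; apply: sig_eq => /=; apply: functional_extensionality => i.
by rewrite /gval /= ffunE.
Defined.

Definition g2 n N (Fc : {set {set 'I_N.+1}} -> 'I_n) m (th : Dmor m N) : sMap (sd m) (Ex (XX n)).
Proof.
refine {| smap := fun p (c : sx (sd m) p) => (@g3 n N Fc m th p c : sx (Ex (XX n)) p) |}.
move=> p p' f c; apply: sMap_eq => q d; apply: sig_eq => /=.
apply: functional_extensionality => i; rewrite /gval /= ffunE.
by rewrite -imset_comp; congr Fc; apply: eq_imset => j /=; rewrite ffunE.
Defined.

Definition g1 n N (Fc : {set {set 'I_N.+1}} -> 'I_n) : sMap (Delta N) (Ex (Ex (XX n))).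
Proof.
refine {| smap := fun m (th : sx (Delta N) m) => (@g2 n N Fc m th : sx (Ex (Ex (XX n))) m) |}.
move=> m m' f th; apply: sMap_eq => p c; apply: sMap_eq => q d; apply: sig_eq => /=.
apply: functional_extensionality => i; rewrite /gval /=.
congr Fc; apply: eq_imset => j /=; rewrite ffunE -imset_comp.
by apply: eq_imset => x /=; rewrite ffunE.
Defined.

Definition Vh n N (k : 'I_N.+1) (h : sMap (Horn k) (Ex (Ex (XX n)))) m (t : sx (Horn k) m)
  p (c : sdx m p) q (d : sdx p q) : 'I_q.+1 -> 'I_n :=
  proj1_sig (smap (smap (smap h m t) p c) q d).

Lemma vtx_mono q (i : 'I_q.+1) : monob [ffun _ : 'I_1 => i].
Proof. by apply/forallP => a; apply/forallP => b; rewrite !ffunE leqnn implybT. Qed.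
Definition vtx q (i : 'I_q.+1) : Dmor 0 q := exist (@monob 0 q) _ (vtx_mono i).

Lemma Vh_vtx n N k h m t p c q d (i : 'I_q.+1) :
  @Vh n N k h m t p c q d i = Vh h t c (sact (s := sd p) (vtx i) d) ord0.
Proof. by rewrite /Vh (snat (smap (smap h m t) p c) (vtx i) d) /= ffunE. Qed.

Lemma Vh_sd n N k h m t p p' (s : Dmor p' p) (c : sdx m p) q (d : sdx p' q) :
  @Vh n N k h m t p' (sact (s := sd m) s c) q d = Vh h t c (smap (sdmap s) q d).
Proof. by rewrite /Vh (snat (smap h m t) s c). Qed.

Lemma Vh_th n N k h m m' (f : Dmor m' m) t p (c : sdx m' p) q (d : sdx p q) :
  @Vh n N k h m' (sact (s := Horn k) f t) p c q d = Vh h t (smap (sdmap f) p c) d.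
Proof. by rewrite /Vh (snat h f t). Qed.

Definition canonD N (C : {set {set 'I_N.+1}}) (j : nat) : {set 'I_N.+1} :=
  \bigcap_(X in C | j < #|X|) X.

Definition canon_ffun N (C : {set {set 'I_N.+1}}) : {ffun 'I_N.+1 -> {set 'I_N.+1}} :=
  [ffun j : 'I_N.+1 => canonD C j :|: (if canonD C 0 == set0 then setT else set0)].

Lemma canonD_mono N (C : {set {set 'I_N.+1}}) i j : i <= j -> canonD C i \subset canonD C j.
Proof.
move=> hij; apply/bigcapsP => X /andP [XC hX]; apply: bigcap_inf.
by rewrite XC (leq_ltn_trans hij hX).
Qed.

Lemma canon_chain N (C : {set {set 'I_N.+1}}) : chainb (canon_ffun C).
Proof.
apply/andP; split.
  apply/forallP => j; rewrite ffunE; case: (canonD C 0 =P set0) => [_|/eqP h].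
    by rewrite setU_eq0 negb_and; apply/orP; right; apply/set0Pn; exists ord0.
  rewrite setU_eq0 negb_and; apply/orP; left.
  apply: contra h => /eqP h; rewrite -subset0 -h; exact: canonD_mono.
apply/forallP => i; apply/forallP => j; apply/implyP => hij; rewrite !ffunE.
by apply: setSU; apply: canonD_mono.
Qed.

Definition canon N (C : {set {set 'I_N.+1}}) : sdx N N := exist (@chainb N N) _ (canon_chain C).

Lemma pt0_chain p (S : {set 'I_p.+1}) :
  chainb [ffun _ : 'I_1 => S :|: (if S == set0 then setT else set0)].
Proof.
apply/andP; split.
  apply/forallP => j; rewrite ffunE; case: (S =P set0) => [_|/eqP h].
    by rewrite setU_eq0 negb_and; apply/orP; right; apply/set0Pn; exists ord0.
  by rewrite setU_eq0 negb_and h.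
by apply/forallP => i; apply/forallP => j; rewrite !ffunE subxx implybT.
Qed.

Definition pt0 p (S : {set 'I_p.+1}) : sdx p 0 := exist (@chainb 0 p) _ (pt0_chain S).

Definition B3 N (C : {set {set 'I_N.+1}}) : {set 'I_N.+1} :=
  [set inord (#|X|.-1) | X : {set 'I_N.+1} in C].
Definition Ftop N (C : {set {set 'I_N.+1}}) : {set 'I_N.+1} := \bigcup_(X in C) X.

Definition FF n N (k : 'I_N.+1) (h : sMap (Horn k) (Ex (Ex (XX n)))) (x0 : 'I_n)
   (C : {set {set 'I_N.+1}}) : 'I_n :=
  match (insub (retr (Ftop C)) : option (sx (Horn k) N)) with
  | Some t => Vh h t (canon C) (pt0 (B3 C)) ord0
  | None => x0 end.

Definition validC N (C : {set {set 'I_N.+1}}) : Prop :=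
  [/\ C != set0, forall X, X \in C -> X != set0 &
      forall X Y, X \in C -> Y \in C -> (X \subset Y) || (Y \subset X)].

Lemma validC_le N (C : {set {set 'I_N.+1}}) X Y : validC C -> X \in C -> Y \in C ->
  #|X| <= #|Y| -> X \subset Y.
Proof.
case=> _ _ hc XC YC hs; case/orP: (hc X Y XC YC) => // YX.
have : Y == X by rewrite eqEcard YX hs.
by move/eqP ->.
Qed.

Lemma canon_val N (C : {set {set 'I_N.+1}}) X : validC C -> X \in C ->
  proj1_sig (canon C) (inord (#|X|.-1)) = X.
Proof.
move=> hv XC; have [hC0 hne hc] := hv.
have hX : 0 < #|X| by rewrite card_gt0; apply: hne.
have hXN : #|X|.-1 < N.+1.
  by rewrite prednK //; apply: leq_trans (max_card _) _; rewrite card_ord.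
have hD : canonD C #|X|.-1 = X.
  apply/eqP; rewrite eqEsubset; apply/andP; split.
    by apply: (bigcap_inf X); rewrite XC /= prednK.
  apply/bigcapsP => Y /andP [YC hY]; apply: (validC_le hv) => //.
  by move: hY; rewrite -ltnS prednK.
have hD0 : canonD C 0 != set0.
  case/set0Pn: hC0 => Y0 Y0C.
  case: (arg_minnP (fun Y : {set 'I_N.+1} => #|Y|) Y0C) => X0 X0C hmin.
  apply/set0Pn; have /set0Pn [x xX0] := hne _ X0C; exists x.
  apply/bigcapP => Y /andP [YC _]; apply: (subsetP _ _ xX0).
  by apply: (validC_le hv) => //; apply: hmin.
by rewrite /= ffunE inordK // hD (negbTE hD0) setU0.
Qed.

Lemma imset_fix (T : finType) (f : T -> T) (B : {set T}) :
  (forall x, x \in B -> f x = x) -> [set f x | x in B] = B.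
Proof. by move=> h; rewrite (eq_in_imset (g := id)) ?imset_id. Qed.

Lemma card_pred_lt N (X : {set 'I_N.+1}) : #|X|.-1 < N.+1.
Proof. have := max_card (mem X); rewrite card_ord; by case: #|X|. Qed.

Lemma sz_mono N p (c2 : sdx N p) :
  monob [ffun j => (inord (#|proj1_sig c2 j|.-1) : 'I_N.+1)].
Proof.
apply/forallP => i; apply/forallP => j; apply/implyP => hij; rewrite !ffunE.
rewrite !inordK ?card_pred_lt // -!subn1 leq_sub2r //.
apply: subset_leq_card.
by move: (proj2_sig c2) => /andP [_ /forallP /(_ i) /forallP /(_ j) /implyP]; apply.
Qed.

Lemma main n N (k : 'I_N.+1) (h : sMap (Horn k) (Ex (Ex (XX n)))) x0 m (t : sx (Horn k) m)
  p (c : sdx m p) (d : sdx p 0) :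
  Vh h t c d ord0 = FF h x0
    [set [set proj1_sig (proj1_sig t) x | x in proj1_sig c j] | j in proj1_sig d ord0].
Proof.
set th := proj1_sig (proj1_sig t).
set B := proj1_sig d ord0.
set C := [set [set th x | x in proj1_sig c j] | j in B].
have hB : B != set0.
  by move: (proj2_sig d) => /andP [/forallP h0 _]; exact: h0 ord0.
have hcne : forall j, proj1_sig c j != set0.
  by move: (proj2_sig c) => /andP [/forallP h0 _].
have hcsub : forall i j : 'I_p.+1, i <= j -> proj1_sig c i \subset proj1_sig c j.
  by move=> i j hij; move: (proj2_sig c) => /andP [_ /forallP /(_ i) /forallP /(_ j) /implyP]; apply.
pose sg := retr B.
have e1 : smap (sdmap sg) 0 d = d.
  apply: sig_eq; apply/ffunP => j; rewrite (ord1 j) /= ffunE.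
  by apply: imset_fix => x xB; apply: retr_fix.
transitivity (Vh h t (sact (s := sd m) sg c) d ord0); first by rewrite Vh_sd e1.
set c1 := sact (s := sd m) sg c.
set A := \bigcup_(j in B) proj1_sig c j.
have hA : A != set0.
  case/set0Pn: hB => j jB; case/set0Pn: (hcne j) => x xj.
  by apply/set0Pn; exists x; apply/bigcupP; exists j.
have c1E : forall j, proj1_sig c1 j = proj1_sig c (proj1_sig sg j) by move=> j; rewrite /= ffunE.
have c1A : forall j, proj1_sig c1 j \subset A.
  by move=> j; rewrite c1E; apply: (bigcup_sup (proj1_sig sg j)); apply: retr_in.
pose rh := retr A.
have e2 : smap (sdmap rh) p c1 = c1.
  apply: sig_eq; apply/ffunP => j; rewrite /= ffunE.
  apply: imset_fix => x xj; apply: retr_fix.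
  exact: (subsetP (c1A j) x xj).
transitivity (Vh h (sact (s := Horn k) rh t) c1 d ord0); first by rewrite Vh_th e2.
have hT : Ftop C = [set th x | x in A].
  apply/setP => y; apply/bigcupP/imsetP.
    move=> [X /imsetP [j jB ->] /imsetP [x xj ->]].
    by exists x => //; apply/bigcupP; exists j.
  move=> [x /bigcupP [j jB xj] ->]; exists [set th x | x in proj1_sig c j].
    by apply/imsetP; exists j.
  by apply: imset_f.
have hTne : Ftop C != set0 by rewrite hT imset_eq0.
have hTh : hornb k (retr (Ftop C)).
  move: (proj2_sig t) => /existsP [j0 /andP [j0k /forallP hj0]].
  apply/existsP; exists j0; rewrite j0k /=; apply/forallP => i.
  have := retr_in i hTne; rewrite hT => /imsetP [x _ ->]; exact: hj0.
pose t' := (exist _ (retr (Ftop C)) hTh : sx (Horn k) N).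
pose ph := Dcomp (proj1_sig t) rh.
have e3 : sact (s := Horn k) rh t = sact (s := Horn k) ph t'.
  apply: sig_eq; apply: sig_eq; apply/ffunP => x; rewrite /= !ffunE.
  set y := sval (sval t) _.
  have yT : y \in Ftop C.
    by rewrite hT; apply: imset_f; have := retr_in x hA; rewrite /= ffunE.
  by have := retr_fix yT; rewrite /= ffunE => ->.
rewrite e3 Vh_th.
set c2 := smap (sdmap ph) p c1.
have c2E : forall j, proj1_sig c2 j = [set th x | x in proj1_sig c (proj1_sig sg j)].
  move=> j; rewrite /= ffunE c1E; apply: eq_in_imset => x xj; rewrite ffunE.
  congr (th _); apply: retr_fix.
  by apply: (subsetP (c1A j)); rewrite c1E.
have hv : validC C.
  split.
  - by rewrite imset_eq0.
  - by move=> X /imsetP [j _ ->]; rewrite imset_eq0.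
  - move=> X Y /imsetP [i _ ->] /imsetP [j _ ->].
    case/orP: (leq_total i j) => hij; apply/orP; [left|right]; apply: imsetS; exact: hcsub.
have c2C : forall j, proj1_sig c2 j \in C.
  by move=> j; rewrite c2E; apply/imsetP; exists (proj1_sig sg j) => //; apply: retr_in.
pose s := exist (@monob p N) _ (sz_mono c2).
have e4 : c2 = sact (s := sd N) s (canon C).
  apply: sig_eq; apply/ffunP => j.
  transitivity (proj1_sig (canon C) (proj1_sig s j)); last by rewrite /= [RHS]ffunE.
  have hs : proj1_sig s j = inord (#|proj1_sig c2 j|.-1) by exact: ffunE.
  rewrite hs canon_val //; apply: c2C.
have hB3 : B3 C != set0 by rewrite imset_eq0; case: hv.
have e5 : smap (sdmap s) 0 d = pt0 (B3 C).
  apply: sig_eq; apply/ffunP => j; rewrite (ord1 j) /= !ffunE (negbTE hB3) setU0.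
  rewrite /B3 -imset_comp; apply: eq_in_imset => x xB; rewrite /= ffunE c2E.
  by rewrite retr_fix.
by rewrite e4 Vh_sd e5 /FF (insubT _ hTh).
Qed.

Unset Implicit Arguments.
Set Strict Implicit.

Theorem lemma6p5 (n : nat) : 1 <= n -> Kan (Ex (Ex (Sing (Cl (Kn n))))).
Proof.
case: n => [//|n] _ N k _ h.
exists (g1 (FF h ord0)).
apply: sMap_eq => m t; apply: sMap_eq => p c; apply: sMap_eq => q d.
apply: sig_eq; apply: functional_extensionality => i.
rewrite /= /gval.
have := Vh_vtx h t c d i; rewrite /Vh => ->.
have := main h ord0 t c (sact (s := sd p) (vtx i) d); rewrite /Vh => ->.
by congr (FF h ord0 [set _ | j in _]); rewrite /= ffunE ffunE.
Qed.
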